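(* Let $\omega=e^{2\pi i/6}$, choose a sign $\pm$, and let $r\in\mathbb C\setminus\{0,\omega^{\pm1}\}$. Let $\Psi^\pm_r:\mathsf{PGL}_2(\mathbb Z)\to\mathsf{PGL}_2(\mathbb C)$ be the homomorphism with $$\Psi^\pm_r(T)=\begin{bmatrix}r&1\\0&1\end{bmatrix},\quad \Psi^\pm_r(S)=\begin{bmatrix}1&r^{-1}\\ -r+\omega^{\pm1}&-1\end{bmatrix},\quad \Psi^\pm_r(V)=\begin{bmatrix}1&\frac{1+r^{-1}}{r-\omega^{\pm1}}\\ 1-r&-1\end{bmatrix}.$$ Then there exists $M\in\mathsf{PGL}_2(\mathbb C)$ with $M\,\Psi^\pm_r(g)\,M^{-1}=\alpha(g)$ for all $g\in\mathsf{PGL}_2(\mathbb Z)$ (equivalently $M\Psi^\pm_r(U)M^{-1}=U$, $M\Psi^\pm_r(K)M^{-1}=K$, $M\Psi^\pm_r(V)M^{-1}=UV$) if and only if $r=-\varphi^2$ or $r=-\bar\varphi^2$.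
   Context: $\varphi=\frac{1+\sqrt5}{2}$, $\bar\varphi=\frac{1-\sqrt5}{2}$. An invertible matrix $\begin{bmatrix}a&b\\c&d\end{bmatrix}$ denotes the Möbius map $x\mapsto(ax+b)/(cx+d)$. In $\mathsf{PGL}_2(\mathbb Z)$: $T(x)=1+x$, $S(x)=-1/x$, $U(x)=1/x$, $V(x)=-x$, $K(x)=1-x$; $T,S,V$ generate $\mathsf{PGL}_2(\mathbb Z)$. Dyer's outer automorphism $\alpha$ of $\mathsf{PGL}_2(\mathbb Z)$ is the involutive automorphism with $\alpha(U)=U$, $\alpha(K)=K$, $\alpha(V)=UV$ (so $\alpha(T)=TU$, $\alpha(S)=V$). *)

(* Defs.v *)
From HB Require Import structures.
From mathcomp Require Import all_boot all_order all_algebra.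
From mathcomp Require Import complex Rstruct.
From Stdlib Require Import Rdefinitions.
Set Implicit Arguments. Unset Strict Implicit. Unset Printing Implicit Defensive.
Import Order.TTheory GRing.Theory Num.Theory.
Local Open Scope ring_scope.

Notation CC := (Rdefinitions.R[i]).

Definition Cr (x : Rdefinitions.R) : CC := Complex x 0.

(* omega = e^{2 pi i / 6} = 1/2 + i sqrt(3)/2 *)
Definition omega : CC := Complex (1/2) (Num.sqrt 3 / 2).

Definition phi : CC := Cr ((1 + Num.sqrt 5) / 2).
Definition phibar : CC := Cr ((1 - Num.sqrt 5) / 2).

(* the 2x2 matrix [a b; c d], denoting x |-> (ax+b)/(cx+d) *)
Definition mx2 (a b c d : CC) : 'M[CC]_2 :=
  \matrix_(i < 2, j < 2)
     if (i : nat) == 0%N then (if (j : nat) == 0%N then a else b)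
     else (if (j : nat) == 0%N then c else d).

(* Equality in PGL_2(C): equality up to a nonzero scalar. *)
Definition proj_eq (A B : 'M[CC]_2) : Prop := exists c : CC, c != 0 /\ A = c *: B.

Definition matT : 'M[CC]_2 := mx2 1 1 0 1.
Definition matS : 'M[CC]_2 := mx2 0 (-1) 1 0.
Definition matV : 'M[CC]_2 := mx2 (-1) 0 0 1.
Definition matU : 'M[CC]_2 := mx2 0 1 1 0.
Definition matK : 'M[CC]_2 := mx2 (-1) 1 0 1.

(* The generators T, S, V of PGL_2(Z); every element of PGL_2(Z) is the
   value of a word in these generators (they generate PGL_2(Z) even as a
   monoid, since S, V have finite order and T^-1 = STSTS in PGL_2(Z)). *)
Inductive gen := gT | gS | gV.

Definition eval_word (f : gen -> 'M[CC]_2) (w : seq gen) : 'M[CC]_2 :=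
  foldr (fun g M => f g *m M) 1%:M w.

Definition gen_mx (g : gen) : 'M[CC]_2 :=
  match g with gT => matT | gS => matS | gV => matV end.

(* Dyer's automorphism alpha on generators: alpha(T) = TU, alpha(S) = V,
   alpha(V) = UV; alpha of a word is the product of the images. *)
Definition alpha_gen (g : gen) : 'M[CC]_2 :=
  match g with gT => matT *m matU | gS => matV | gV => matU *m matV end.

(* omega^{+1} or omega^{-1} according to the sign s (true = +) *)
Definition omega_s (s : bool) : CC := if s then omega else omega^-1.

Definition Psi_gen (s : bool) (r : CC) (g : gen) : 'M[CC]_2 :=
  match g with
  | gT => mx2 r 1 0 1
  | gS => mx2 1 r^-1 (- r + omega_s s) (-1)
  | gV => mx2 1 ((1 + r^-1) / (r - omega_s s)) (1 - r) (-1)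
  end.

(* Main.v *)
Require Import Defs.
From HB Require Import structures.
From mathcomp Require Import all_boot all_order all_algebra.
From mathcomp Require Import complex Rstruct ring.
Import Order.TTheory GRing.Theory Num.Theory.
Local Open Scope ring_scope.

Lemma mx2_mul a b c d e f g h :
  mx2 a b c d *m mx2 e f g h = mx2 (a*e+b*g) (a*f+b*h) (c*e+d*g) (c*f+d*h).
Proof.
apply/matrixP => i j; rewrite !mxE !big_ord_recl big_ord0 !mxE /=.
by case: i => [[|[|i]] Hi] //; case: j => [[|[|j]] Hj] //=; rewrite addr0.
Qed.

Lemma mx2_scale k a b c d : k *: mx2 a b c d = mx2 (k*a) (k*b) (k*c) (k*d).
Proof.
apply/matrixP => i j; rewrite !mxE.
by case: i => [[|[|i]] Hi] //; case: j => [[|[|j]] Hj].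
Qed.

Lemma mx2_1 : 1%:M = mx2 1 0 0 1.
Proof.
apply/matrixP => i j; rewrite !mxE.
by case: i => [[|[|i]] Hi] //; case: j => [[|[|j]] Hj].
Qed.

Lemma mx2_tr a b c d : \tr (mx2 a b c d) = a + d.
Proof. by rewrite /mxtrace !big_ord_recl big_ord0 !mxE /= addr0. Qed.

Lemma omega_eq : omega ^+ 2 = omega - 1.
Proof.
rewrite expr2 /omega /=.
apply/eqP; rewrite eq_complex /=; apply/andP; split; apply/eqP.
- have h3 : Num.sqrt (3:Rdefinitions.R) ^+ 2 = 3 by rewrite sqr_sqrtr // ler0n.
  by field: h3.
- by field.
Qed.
Lemma omega_s_eq s : omega_s s ^+ 2 = omega_s s - 1.
Proof.
case: s => /=; first exact: omega_eq.
have Ho := omega_eq.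
have o0 : omega != 0.
  apply/negP => /eqP o0; move: Ho; rewrite o0 expr2 mulr0 sub0r => /eqP.
  by rewrite eq_sym oppr_eq0 oner_eq0.
by field: Ho.
Qed.

Lemma ne0_of_inv (c d : CC) : c * d = 1 -> c != 0.
Proof. by move=> h; apply/negP => /eqP c0; move: h; rewrite c0 mul0r => /eqP; rewrite eq_sym oner_eq0. Qed.

Lemma conj_gen s (r : CC) : r ^+ 2 = -3 * r - 1 ->
  exists M : 'M[CC]_2, M \in unitmx /\
    forall g, exists c, c != 0 /\ M *m Psi_gen s r g = c *: (alpha_gen g *m M).
Proof.
move=> Hr; have Hw := omega_s_eq s; move: Hw.
rewrite /Psi_gen; set w := omega_s s => Hw.
have r0 : r != 0.
  apply/negP => /eqP r0; move: Hr; rewrite r0 expr2 mulr0 mulr0 sub0r => /eqP.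
  by rewrite eq_sym oppr_eq0 oner_eq0.
have r1 : 2 + 2 * r != 0.
  apply/negP => /eqP e; have : (2 + 2*r)*(r+2) = 2 by ring: Hr.
  by rewrite e mul0r => /eqP; rewrite eq_sym pnatr_eq0.
have rw : r - w != 0.
  apply/negP => /eqP e; have : (r-w)*(r-1+w) = -4*r by ring: Hr Hw.
  rewrite e mul0r => /eqP; rewrite eq_sym mulf_eq0 oppr_eq0 pnatr_eq0 /=.
  by rewrite (negbTE r0).
have ri : r^-1 = - r - 3.
  by apply: (mulfI r0); rewrite mulfV //; ring: Hr.
have rwi : (r - w)^-1 = -1 - r / 4 + 3 * w / 4 + r * w / 4.
  apply: (mulfI rw); rewrite mulfV //.
  by field: Hr Hw.
exists (mx2 (1 + r + r*w) w (-1 + w + r*w) 1); split.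
  have hMN : mx2 (1 + r + r*w) w (-1 + w + r*w) 1 *m
     ((2 + 2*r)^-1 *: mx2 1 (-w) (1-w-r*w) (1+r+r*w)) = 1%:M.
    rewrite -scalemxAr mx2_mul mx2_scale mx2_1; congr mx2; field: Hr Hw => //.
  exact: (mulmx1_unit hMN).1.
case.
- exists (r + 1); split.
    by apply: (@ne0_of_inv _ (r+2)); ring: Hr.
  rewrite /alpha_gen /matT /matU !mx2_mul mx2_scale.
  congr mx2; ring: Hr Hw.
- exists (- w^+2 * (r + 2)); split.
    by apply: (@ne0_of_inv _ (w*(r+1))); ring: Hr Hw.
  rewrite ri /alpha_gen /matV !mx2_mul mx2_scale.
  congr mx2; ring: Hr Hw.
- exists (1/2 - 2 * w - r * w / 2); split.
    by apply: (@ne0_of_inv _ (-1/2 + w/2 - r*w/2)); field: Hr Hw.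
  rewrite ri rwi /alpha_gen /matV /matU !mx2_mul mx2_scale.
  by congr mx2; field: Hr Hw.
Qed.
Lemma Cr_rm (x : Rdefinitions.R) : Cr x = x%:C%C.
Proof. by []. Qed.

Lemma phi_fact (r : CC) : (r + phi^+2) * (r + phibar^+2) = r^+2 + 3*r + 1.
Proof.
have h5 : Num.sqrt (5:Rdefinitions.R) ^+ 2 = 5 by rewrite sqr_sqrtr // ler0n.
have e1 : phi^+2 + phibar^+2 = 3.
  rewrite /phi /phibar !Cr_rm -!rmorphXn -rmorphD.
  have -> : ((1 + Num.sqrt 5) / 2) ^+ 2 + ((1 - Num.sqrt 5) / 2) ^+ 2 = 3 :> Rdefinitions.R.
    by field: h5.
  by rewrite rmorph_nat.
have e2 : phi^+2 * phibar^+2 = 1.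
  rewrite /phi /phibar !Cr_rm -!rmorphXn -rmorphM.
  have -> : ((1 + Num.sqrt 5) / 2) ^+ 2 * ((1 - Num.sqrt 5) / 2) ^+ 2 = 1 :> Rdefinitions.R.
    by field: h5.
  by rewrite rmorph1.
transitivity (r^+2 + (phi^+2 + phibar^+2) * r + phi^+2 * phibar^+2); first by ring.
by rewrite e1 e2.
Qed.

Lemma eval_word1 f g : eval_word f [:: g] = f g.
Proof. by rewrite /eval_word /= mulmx1. Qed.

Theorem mainTheorem12 (s : bool) (r : CC) :
  r != 0 -> r != omega_s s ->
  ((exists M : 'M[CC]_2, M \in unitmx /\
      forall w : seq gen,
        proj_eq (M *m eval_word (Psi_gen s r) w *m invmx M)
                (eval_word alpha_gen w))
   <-> (r = - phi ^+ 2 \/ r = - phibar ^+ 2)).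
Proof.
move=> r0 rw; split.
- move=> [M [uM H]]; have [c [c0 hc]] := H [:: gT].
  rewrite !eval_word1 /= in hc.
  set A := mx2 r 1 0 1 in hc.
  have hB : matT *m matU = mx2 1 1 1 0.
    by rewrite /matT /matU mx2_mul; congr mx2; ring.
  rewrite hB in hc.
  have t1 : \tr (M *m A *m invmx M) = \tr A by rewrite mxtrace_mulC mulKmx.
  have t2 : \tr ((M *m A *m invmx M) *m (M *m A *m invmx M)) = \tr (A *m A).
    by rewrite !mulmxA (mulmxKV uM) mxtrace_mulC -!mulmxA mulKmx.
  rewrite hc mxtraceZ !mx2_tr /A in t1.
  rewrite hc -scalemxAl -scalemxAr scalerA !mx2_mul mxtraceZ !mx2_tr /A in t2.
  have ec : c = r + 1 by move: t1; rewrite addr0 mulr1.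
  rewrite ec in t2.
  have e : 2 * (r^+2 + 3*r + 1) = 0.
    transitivity ((r + 1) * (r + 1) * (1 * 1 + 1 * 1 + (1 * 1 + 0 * 0))
                  - (r * r + 1 * 0 + (0 * 1 + 1 * 1))); first by ring.
    by rewrite t2 subrr.
  move: e => /eqP; rewrite mulf_eq0 pnatr_eq0 /= -phi_fact mulf_eq0.
  by case/orP => /eqP h; [left|right]; apply/eqP; rewrite -addr_eq0 h.
- move=> hr.
  have Hr : r ^+ 2 = -3 * r - 1.
    have h : r^+2 + 3*r + 1 = 0 by rewrite -phi_fact; case: hr => ->; ring.
    transitivity ((r^+2 + 3*r + 1) - 3*r - 1); first by ring.
    by rewrite h; ring.
  have [M [uM hM]] := @conj_gen s r Hr.
  exists M; split => // w; elim: w => [|g w [d [d0 IH]]].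
    by exists 1; rewrite /= mulmx1 mulmxV // scale1r; split => //; apply: oner_neq0.
  have [c [c0 hc]] := hM g.
  exists (c * d); split; first by rewrite mulf_neq0.
  rewrite /= -scalerA.
  have -> : M *m (Psi_gen s r g *m eval_word (Psi_gen s r) w) *m invmx M
    = (M *m Psi_gen s r g *m invmx M) *m (M *m eval_word (Psi_gen s r) w *m invmx M).
    by rewrite !mulmxA (mulmxKV uM).
  by rewrite IH hc -!scalemxAl (mulmxK uM) -scalemxAr.
Qed.
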